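(* Every pre-Hilbert $*$-category is quasi-abelian, i.e. it is additive, every morphism has a kernel and a cokernel, normal monomorphisms are stable under pushout along arbitrary morphisms, and normal epimorphisms are stable under pullback along arbitrary morphisms.
   Context: A $*$-category is a category equipped with a choice of morphism $f^*\colon Y\to X$ for each morphism $f\colon X\to Y$ such that $1^*=1$, $(gf)^*=f^*g^*$ and $(f^* )^*=f$. A morphism $f$ is an isometry if $f^*f=1$. A kernel of $f$ is an equaliser of $f$ and the zero morphism; a cokernel is dual; a normal monomorphism (resp. epimorphism) is a morphism that is a kernel (resp. cokernel) of some morphism. An orthonormal biproduct of $X_1,X_2$ is a biproduct $(X,s_1,r_1,s_2,r_2)$ with $r_k=s_k^*$. A pre-Hilbert $*$-category is a $*$-category in which (R1) there is a zero object, (R2) every pair of objects has an orthonormal biproduct, (R3) every morphism has an isometric kernel, and (R4) every diagonal $\Delta\colon X\to X\oplus X$ is a normal monomorphism. A category is additive if it has finite biproducts and the induced enrichment in commutative monoids is an enrichment in abelian groups. *)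

(* Defs.v *)
Set Implicit Arguments.
Unset Strict Implicit.

Record Category := {
  ob :> Type;
  hom : ob -> ob -> Type;
  idm : forall X, hom X X;
  comp : forall X Y Z, hom Y Z -> hom X Y -> hom X Z;
  comp_assoc : forall X Y Z W (f : hom X Y) (g : hom Y Z) (h : hom Z W),
      comp h (comp g f) = comp (comp h g) f;
  comp_id_l : forall X Y (f : hom X Y), comp (idm Y) f = f;
  comp_id_r : forall X Y (f : hom X Y), comp f (idm X) = f
}.

Arguments hom {c} _ _.
Arguments idm {c} _.
Arguments comp {c X Y Z} _ _.

Notation "g ∘ f" := (comp g f) (at level 40, left associativity).

Section CatDefs.
Variable C : Category.

Definition is_initial (Z : C) : Prop :=
  forall X : C, exists f : hom Z X, forall g : hom Z X, g = f.
Definition is_terminal (Z : C) : Prop :=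
  forall X : C, exists f : hom X Z, forall g : hom X Z, g = f.
Definition is_zero_object (Z : C) : Prop := is_initial Z /\ is_terminal Z.
Definition has_zero_object : Prop := exists Z : C, is_zero_object Z.

Definition is_zero_mor {X Y : C} (f : hom X Y) : Prop :=
  exists (Z : C) (a : hom X Z) (b : hom Z Y), is_zero_object Z /\ f = b ∘ a.

Definition is_equalizer {E X Y : C} (f g : hom X Y) (e : hom E X) : Prop :=
  f ∘ e = g ∘ e /\
  forall (W : C) (h : hom W X), f ∘ h = g ∘ h ->
    exists u : hom W E, e ∘ u = h /\ forall u' : hom W E, e ∘ u' = h -> u' = u.
Definition is_coequalizer {X Y Q : C} (f g : hom X Y) (q : hom Y Q) : Prop :=
  q ∘ f = q ∘ g /\
  forall (W : C) (h : hom Y W), h ∘ f = h ∘ g ->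
    exists u : hom Q W, u ∘ q = h /\ forall u' : hom Q W, u' ∘ q = h -> u' = u.

Definition is_kernel {K X Y : C} (f : hom X Y) (k : hom K X) : Prop :=
  exists z : hom X Y, is_zero_mor z /\ is_equalizer f z k.
Definition is_cokernel {X Y Q : C} (f : hom X Y) (q : hom Y Q) : Prop :=
  exists z : hom X Y, is_zero_mor z /\ is_coequalizer f z q.
Definition has_kernel {X Y : C} (f : hom X Y) : Prop :=
  exists (K : C) (k : hom K X), is_kernel f k.
Definition has_cokernel {X Y : C} (f : hom X Y) : Prop :=
  exists (Q : C) (q : hom Y Q), is_cokernel f q.

Definition normal_mono {K X : C} (m : hom K X) : Prop :=
  exists (Y : C) (f : hom X Y), is_kernel f m.
Definition normal_epi {Y Q : C} (e : hom Y Q) : Prop :=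
  exists (X : C) (f : hom X Y), is_cokernel f e.

Definition is_biproduct (X1 X2 B : C)
    (s1 : hom X1 B) (r1 : hom B X1) (s2 : hom X2 B) (r2 : hom B X2) : Prop :=
  r1 ∘ s1 = idm X1 /\ r2 ∘ s2 = idm X2 /\
  is_zero_mor (r2 ∘ s1) /\ is_zero_mor (r1 ∘ s2) /\
  (forall (W : C) (f1 : hom W X1) (f2 : hom W X2),
     exists u : hom W B, (r1 ∘ u = f1 /\ r2 ∘ u = f2) /\
       forall u' : hom W B, r1 ∘ u' = f1 -> r2 ∘ u' = f2 -> u' = u) /\
  (forall (W : C) (g1 : hom X1 W) (g2 : hom X2 W),
     exists u : hom B W, (u ∘ s1 = g1 /\ u ∘ s2 = g2) /\
       forall u' : hom B W, u' ∘ s1 = g1 -> u' ∘ s2 = g2 -> u' = u).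

Definition has_biproducts : Prop :=
  forall X1 X2 : C, exists (B : C) (s1 : hom X1 B) (r1 : hom B X1)
    (s2 : hom X2 B) (r2 : hom B X2), is_biproduct s1 r1 s2 r2.

(* h = f + g in the induced commutative-monoid enrichment:
   h = codiag ∘ <f, g> through a biproduct Y ⊕ Y *)
Definition is_sum {X Y : C} (f g h : hom X Y) : Prop :=
  exists (B : C) (s1 : hom Y B) (r1 : hom B Y) (s2 : hom Y B) (r2 : hom B Y),
    is_biproduct s1 r1 s2 r2 /\
    exists (d : hom X B) (c : hom B Y),
      r1 ∘ d = f /\ r2 ∘ d = g /\ c ∘ s1 = idm Y /\ c ∘ s2 = idm Y /\
      h = c ∘ d.

(* additive: finite biproducts (zero object + binary biproducts) and every
   morphism has an additive inverse in the induced enrichment *)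
Definition additive : Prop :=
  has_zero_object /\ has_biproducts /\
  forall (X Y : C) (f : hom X Y),
    exists (g h : hom X Y), is_sum f g h /\ is_zero_mor h.

(*      f              *)
(*   K ---> Y          *)
(*  m|      |m'        *)
(*   X ---> P          *)
(*      f'             *)
Definition is_pushout {K X Y P : C} (m : hom K X) (f : hom K Y)
    (m' : hom Y P) (f' : hom X P) : Prop :=
  m' ∘ f = f' ∘ m /\
  forall (W : C) (a : hom Y W) (b : hom X W), a ∘ f = b ∘ m ->
    exists u : hom P W, (u ∘ m' = a /\ u ∘ f' = b) /\
      forall u' : hom P W, u' ∘ m' = a -> u' ∘ f' = b -> u' = u.
(*      f'             *)
(*   P ---> X          *)
(*  e'|     |e         *)
(*   Y ---> Q          *)
(*      f              *)
Definition is_pullback {X Y Q P : C} (e : hom X Q) (f : hom Y Q)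
    (e' : hom P Y) (f' : hom P X) : Prop :=
  f ∘ e' = e ∘ f' /\
  forall (W : C) (a : hom W Y) (b : hom W X), f ∘ a = e ∘ b ->
    exists u : hom W P, (e' ∘ u = a /\ f' ∘ u = b) /\
      forall u' : hom W P, e' ∘ u' = a -> f' ∘ u' = b -> u' = u.

Definition quasi_abelian : Prop :=
  additive /\
  (forall (X Y : C) (f : hom X Y), has_kernel f) /\
  (forall (X Y : C) (f : hom X Y), has_cokernel f) /\
  (forall (K X Y P : C) (m : hom K X) (f : hom K Y) (m' : hom Y P) (f' : hom X P),
      normal_mono m -> is_pushout m f m' f' -> normal_mono m') /\
  (forall (X Y Q P : C) (e : hom X Q) (f : hom Y Q) (e' : hom P Y) (f' : hom P X),
      normal_epi e -> is_pullback e f e' f' -> normal_epi e').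

End CatDefs.

Record StarCategory := {
  scat :> Category;
  star : forall X Y : scat, hom X Y -> hom Y X;
  star_id : forall X : scat, star (idm X) = idm X;
  star_comp : forall (X Y Z : scat) (f : hom X Y) (g : hom Y Z),
      star (g ∘ f) = star f ∘ star g;
  star_star : forall (X Y : scat) (f : hom X Y), star (star f) = f
}.

Arguments star {s X Y} _.

Section StarDefs.
Variable C : StarCategory.

Definition isometry {X Y : C} (f : hom X Y) : Prop := star f ∘ f = idm X.

Definition is_orthonormal_biproduct (X1 X2 B : C)
    (s1 : hom X1 B) (r1 : hom B X1) (s2 : hom X2 B) (r2 : hom B X2) : Prop :=
  is_biproduct s1 r1 s2 r2 /\ r1 = star s1 /\ r2 = star s2.

Definition preHilbert : Prop :=
  (* (R1) *) has_zero_object C /\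
  (* (R2) *) (forall X1 X2 : C, exists (B : C) (s1 : hom X1 B) (r1 : hom B X1)
                (s2 : hom X2 B) (r2 : hom B X2),
                is_orthonormal_biproduct s1 r1 s2 r2) /\
  (* (R3) *) (forall (X Y : C) (f : hom X Y),
                exists (K : C) (k : hom K X), is_kernel f k /\ isometry k) /\
  (* (R4) *) (forall (X B : C) (s1 : hom X B) (r1 : hom B X) (s2 : hom X B)
                (r2 : hom B X) (d : hom X B),
                is_orthonormal_biproduct s1 r1 s2 r2 ->
                r1 ∘ d = idm X -> r2 ∘ d = idm X -> normal_mono d).
End StarDefs.

(* Main.v *)
Require Import Defs.
From Stdlib Require Import ClassicalEpsilon.

Section Basic.
Variable C : StarCategory.

Lemma zero_unique {X Y : C} (f g : hom X Y) : is_zero_mor f -> is_zero_mor g -> f = g.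
Proof.
  intros [Z [a [b [[HZi HZt] ->]]]] [Z' [a' [b' [[HZi' HZt'] ->]]]].
  destruct (HZi Z') as [c Hc].
  destruct (HZi Y) as [y Hy].
  destruct (HZt' X) as [x Hx].
  assert (E1 : b = b' ∘ c) by (rewrite (Hy b), (Hy (b' ∘ c)); reflexivity).
  assert (E2 : a' = c ∘ a) by (rewrite (Hx a'), (Hx (c ∘ a)); reflexivity).
  rewrite E1, E2, comp_assoc. reflexivity.
Qed.

Lemma zero_compl {X Y W : C} (f : hom X Y) (g : hom Y W) : is_zero_mor f -> is_zero_mor (g ∘ f).
Proof. intros [Z [a [b [HZ ->]]]]. exists Z, a, (g ∘ b). split; auto. apply comp_assoc. Qed.

Lemma zero_compr {X Y W : C} (f : hom X Y) (g : hom W X) : is_zero_mor f -> is_zero_mor (f ∘ g).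
Proof. intros [Z [a [b [HZ ->]]]]. exists Z, (a ∘ g), b. split; auto. symmetry; apply comp_assoc. Qed.

Lemma zero_star {X Y : C} (f : hom X Y) : is_zero_mor f -> is_zero_mor (star f).
Proof. intros [Z [a [b [HZ ->]]]]. exists Z, (star b), (star a). split; auto. apply star_comp. Qed.

Lemma star_inj {X Y : C} (f g : hom X Y) : star f = star g -> f = g.
Proof. intro H. rewrite <- (star_star f), <- (star_star g), H. reflexivity. Qed.

Lemma kernel_iff {K X Y : C} (f : hom X Y) (k : hom K X) :
  is_kernel f k <-> (is_zero_mor (f ∘ k) /\ forall (W : C) (h : hom W X), is_zero_mor (f ∘ h) ->
    exists u : hom W K, k ∘ u = h /\ forall u', k ∘ u' = h -> u' = u).
Proof.
  split.
  - intros [z [Hz [E U]]]. split.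
    + rewrite E. apply zero_compr; auto.
    + intros W h Hh. apply U. apply zero_unique; auto. apply zero_compr; auto.
  - intros [Hk U]. exists (f ∘ k ∘ star k).
    assert (Hz : is_zero_mor (f ∘ k ∘ star k)) by (apply zero_compr; auto).
    split; [exact Hz|]. split.
    + apply zero_unique; auto. apply zero_compr; auto.
    + intros W h Hh. apply U. rewrite Hh. apply zero_compr; auto.
Qed.

Lemma coker_iff {X Y Q : C} (f : hom X Y) (q : hom Y Q) :
  is_cokernel f q <-> (is_zero_mor (q ∘ f) /\ forall (W : C) (h : hom Y W), is_zero_mor (h ∘ f) ->
    exists u : hom Q W, u ∘ q = h /\ forall u', u' ∘ q = h -> u' = u).
Proof.
  split.
  - intros [z [Hz [E U]]]. split.
    + rewrite E. apply zero_compl; auto.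
    + intros W h Hh. apply U. apply zero_unique; auto. apply zero_compl; auto.
  - intros [Hk U]. exists (star q ∘ (q ∘ f)).
    assert (Hz : is_zero_mor (star q ∘ (q ∘ f))) by (apply zero_compl; auto).
    split; [exact Hz|]. split.
    + apply zero_unique; auto. apply zero_compl; auto.
    + intros W h Hh. apply U. rewrite Hh. apply zero_compl; auto.
Qed.

Lemma ker_star_coker {K X Y : C} (f : hom X Y) (k : hom K Y) :
  is_kernel (star f) k -> is_cokernel f (star k).
Proof.
  intros H. apply kernel_iff in H. destruct H as [Hk U].
  apply coker_iff. split.
  - apply zero_star in Hk. rewrite star_comp, star_star in Hk. exact Hk.
  - intros W h Hh. apply zero_star in Hh. rewrite star_comp in Hh.
    destruct (U _ _ Hh) as [u [Eu Uu]]. exists (star u). split.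
    + rewrite <- star_comp, Eu, star_star. reflexivity.
    + intros u' E. apply star_inj. rewrite star_star. apply Uu.
      rewrite <- (star_star k), <- star_comp, E. reflexivity.
Qed.

Lemma coker_star_ker {X Y Q : C} (f : hom X Y) (q : hom Y Q) :
  is_cokernel f q -> is_kernel (star f) (star q).
Proof.
  intros H. apply coker_iff in H. destruct H as [Hk U].
  apply kernel_iff. split.
  - apply zero_star in Hk. rewrite star_comp in Hk. exact Hk.
  - intros W h Hh. apply zero_star in Hh. rewrite star_comp, star_star in Hh.
    destruct (U _ _ Hh) as [u [Eu Uu]]. exists (star u). split.
    + rewrite <- star_comp, Eu, star_star. reflexivity.
    + intros u' E. apply star_inj. rewrite star_star. apply Uu.
      rewrite <- E, star_comp, star_star. reflexivity.
Qed.

Lemma pushout_star {K X Y P : C} (m : hom K X) (f : hom K Y) (m' : hom Y P) (f' : hom X P) :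
  is_pushout m f m' f' -> is_pullback (star m) (star f) (star m') (star f').
Proof.
  intros [E U]. split.
  - rewrite <- !star_comp, E. reflexivity.
  - intros W a b Eab.
    assert (E2 : star a ∘ f = star b ∘ m).
    { rewrite <- (star_star f), <- (star_star m), <- !star_comp, Eab. reflexivity. }
    destruct (U _ _ _ E2) as [u [[Ha Hb] Uu]].
    exists (star u). split.
    + split.
      * rewrite <- star_comp, Ha, star_star. reflexivity.
      * rewrite <- star_comp, Hb, star_star. reflexivity.
    + intros u' H1 H2. apply star_inj. rewrite star_star. apply Uu.
      * rewrite <- H1, star_comp, star_star. reflexivity.
      * rewrite <- H2, star_comp, star_star. reflexivity.
Qed.

Lemma iso_mono {X Y : C} (k : hom X Y) : isometry k ->
  forall W (x y : hom W X), k ∘ x = k ∘ y -> x = y.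
Proof.
  unfold isometry. intros Hk W x y E.
  rewrite <- (comp_id_l x), <- (comp_id_l y), <- Hk, <- !comp_assoc, E. reflexivity.
Qed.

End Basic.

Ltac lassoc := repeat rewrite comp_assoc.

Section PH.
Variable C : StarCategory.
Variable Z0 : C.
Variable HZ0 : is_zero_object (C:=C) Z0.
Variable HOB : forall X1 X2 : C, exists (B : C) (s1 : hom X1 B) (r1 : hom B X1)
                (s2 : hom X2 B) (r2 : hom B X2),
                is_orthonormal_biproduct s1 r1 s2 r2.
Variable HK : forall (X Y : C) (f : hom X Y),
                exists (K : C) (k : hom K X), is_kernel f k /\ isometry k.
Variable HR4 : forall (X B : C) (s1 : hom X B) (r1 : hom B X) (s2 : hom X B)
                (r2 : hom B X) (d : hom X B),
                is_orthonormal_biproduct s1 r1 s2 r2 ->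
                r1 ∘ d = idm X -> r2 ∘ d = idm X -> normal_mono d.

Lemma zm_ex (X Y : C) : exists f : hom X Y, is_zero_mor f.
Proof.
  destruct HZ0 as [Hi Ht]. destruct (Hi Y) as [b _]. destruct (Ht X) as [a _].
  exists (b ∘ a), Z0, a, b. split; auto.
Qed.
Definition zm (X Y : C) : hom X Y := proj1_sig (constructive_indefinite_description _ (zm_ex X Y)).
Lemma zm_zero X Y : is_zero_mor (zm X Y).
Proof. exact (proj2_sig (constructive_indefinite_description _ (zm_ex X Y))). Qed.

Lemma ob_ex (X1 X2 : C) : exists t : {B : C & (hom X1 B * hom X2 B)%type},
  is_biproduct (fst (projT2 t)) (star (fst (projT2 t))) (snd (projT2 t)) (star (snd (projT2 t))).
Proof.
  destruct (HOB X1 X2) as [B [s1 [r1 [s2 [r2 [Hb [-> ->]]]]]]].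
  exists (existT _ B (s1, s2)). exact Hb.
Qed.
Definition obt X1 X2 := proj1_sig (constructive_indefinite_description _ (ob_ex X1 X2)).
Definition BP X1 X2 : C := projT1 (obt X1 X2).
Definition i1 {X1 X2 : C} : hom X1 (BP X1 X2) := fst (projT2 (obt X1 X2)).
Definition i2 {X1 X2 : C} : hom X2 (BP X1 X2) := snd (projT2 (obt X1 X2)).
Definition p1 {X1 X2 : C} : hom (BP X1 X2) X1 := star i1.
Definition p2 {X1 X2 : C} : hom (BP X1 X2) X2 := star i2.
Lemma BP_spec X1 X2 : is_biproduct (@i1 X1 X2) p1 i2 p2.
Proof. exact (proj2_sig (constructive_indefinite_description _ (ob_ex X1 X2))). Qed.

Lemma p1i1 {X1 X2} : p1 ∘ @i1 X1 X2 = idm X1.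
Proof. apply (BP_spec X1 X2). Qed.
Lemma p2i2 {X1 X2} : p2 ∘ @i2 X1 X2 = idm X2.
Proof. apply (BP_spec X1 X2). Qed.
Lemma p2i1 {X1 X2} : is_zero_mor (p2 ∘ @i1 X1 X2).
Proof. apply (BP_spec X1 X2). Qed.
Lemma p1i2 {X1 X2} : is_zero_mor (p1 ∘ @i2 X1 X2).
Proof. apply (BP_spec X1 X2). Qed.

Lemma pair_ex {W X1 X2 : C} (f : hom W X1) (g : hom W X2) :
  exists u : hom W (BP X1 X2), p1 ∘ u = f /\ p2 ∘ u = g.
Proof.
  destruct (BP_spec X1 X2) as [_ [_ [_ [_ [H _]]]]].
  destruct (H W f g) as [u [Hu _]]. exists u. exact Hu.
Qed.
Definition pr {W X1 X2 : C} (f : hom W X1) (g : hom W X2) : hom W (BP X1 X2) :=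
  proj1_sig (constructive_indefinite_description _ (pair_ex f g)).
Lemma pr_p1 {W X1 X2 : C} (f : hom W X1) (g : hom W X2) : p1 ∘ pr f g = f.
Proof. exact (proj1 (proj2_sig (constructive_indefinite_description _ (pair_ex f g)))). Qed.
Lemma pr_p2 {W X1 X2 : C} (f : hom W X1) (g : hom W X2) : p2 ∘ pr f g = g.
Proof. exact (proj2 (proj2_sig (constructive_indefinite_description _ (pair_ex f g)))). Qed.
Lemma pair_ext {W X1 X2 : C} (u v : hom W (BP X1 X2)) :
  p1 ∘ u = p1 ∘ v -> p2 ∘ u = p2 ∘ v -> u = v.
Proof.
  intros E1 E2.
  destruct (BP_spec X1 X2) as [_ [_ [_ [_ [H _]]]]].
  destruct (H W (p1 ∘ v) (p2 ∘ v)) as [u0 [_ U]].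
  rewrite (U u E1 E2), (U v eq_refl eq_refl). reflexivity.
Qed.

Lemma copair_ex {Y X1 X2 : C} (f : hom X1 Y) (g : hom X2 Y) :
  exists u : hom (BP X1 X2) Y, u ∘ i1 = f /\ u ∘ i2 = g.
Proof.
  destruct (BP_spec X1 X2) as [_ [_ [_ [_ [_ H]]]]].
  destruct (H Y f g) as [u [Hu _]]. exists u. exact Hu.
Qed.
Definition cp {Y X1 X2 : C} (f : hom X1 Y) (g : hom X2 Y) : hom (BP X1 X2) Y :=
  proj1_sig (constructive_indefinite_description _ (copair_ex f g)).
Lemma cp_i1 {Y X1 X2 : C} (f : hom X1 Y) (g : hom X2 Y) : cp f g ∘ i1 = f.
Proof. exact (proj1 (proj2_sig (constructive_indefinite_description _ (copair_ex f g)))). Qed.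
Lemma cp_i2 {Y X1 X2 : C} (f : hom X1 Y) (g : hom X2 Y) : cp f g ∘ i2 = g.
Proof. exact (proj2 (proj2_sig (constructive_indefinite_description _ (copair_ex f g)))). Qed.
Lemma copair_ext {Y X1 X2 : C} (u v : hom (BP X1 X2) Y) :
  u ∘ i1 = v ∘ i1 -> u ∘ i2 = v ∘ i2 -> u = v.
Proof.
  intros E1 E2.
  destruct (BP_spec X1 X2) as [_ [_ [_ [_ [_ H]]]]].
  destruct (H Y (v ∘ i1) (v ∘ i2)) as [u0 [_ U]].
  rewrite (U u E1 E2), (U v eq_refl eq_refl). reflexivity.
Qed.

Lemma l_pr_p1 {V W X1 X2 : C} (h : hom X1 V) (f : hom W X1) (g : hom W X2) : h ∘ p1 ∘ pr f g = h ∘ f.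
Proof. rewrite <- comp_assoc, pr_p1. reflexivity. Qed.
Lemma l_pr_p2 {V W X1 X2 : C} (h : hom X2 V) (f : hom W X1) (g : hom W X2) : h ∘ p2 ∘ pr f g = h ∘ g.
Proof. rewrite <- comp_assoc, pr_p2. reflexivity. Qed.
Lemma l_cp_i1 {V Y X1 X2 : C} (h : hom Y V) (f : hom X1 Y) (g : hom X2 Y) : h ∘ cp f g ∘ i1 = h ∘ f.
Proof. rewrite <- comp_assoc, cp_i1. reflexivity. Qed.
Lemma l_cp_i2 {V Y X1 X2 : C} (h : hom Y V) (f : hom X1 Y) (g : hom X2 Y) : h ∘ cp f g ∘ i2 = h ∘ g.
Proof. rewrite <- comp_assoc, cp_i2. reflexivity. Qed.

Lemma pr_comp {V W X1 X2 : C} (f : hom W X1) (g : hom W X2) (h : hom V W) :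
  pr f g ∘ h = pr (f ∘ h) (g ∘ h).
Proof. apply pair_ext; lassoc; rewrite ?pr_p1, ?pr_p2; reflexivity. Qed.
Lemma cp_comp {V Y X1 X2 : C} (f : hom X1 Y) (g : hom X2 Y) (h : hom Y V) :
  h ∘ cp f g = cp (h ∘ f) (h ∘ g).
Proof. apply copair_ext; rewrite <- !comp_assoc, ?cp_i1, ?cp_i2; reflexivity. Qed.

Lemma pr_eta {W X1 X2 : C} (u : hom W (BP X1 X2)) : u = pr (p1 ∘ u) (p2 ∘ u).
Proof. apply pair_ext; rewrite ?pr_p1, ?pr_p2; reflexivity. Qed.

Lemma zero_of_proj {W X1 X2 : C} (u : hom W (BP X1 X2)) :
  is_zero_mor (p1 ∘ u) -> is_zero_mor (p2 ∘ u) -> is_zero_mor u.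
Proof.
  intros H1 H2. assert (E : u = zm _ _).
  { apply pair_ext; apply zero_unique; auto; apply zero_compl; apply zm_zero. }
  rewrite E. apply zm_zero.
Qed.

Lemma pr_zero_r {W X1 X2 : C} (f : hom W X1) (z : hom W X2) : is_zero_mor z -> pr f z = i1 ∘ f.
Proof.
  intros Hz. apply pair_ext; lassoc; rewrite ?pr_p1, ?pr_p2, ?p1i1, ?comp_id_l; auto.
  apply zero_unique; auto. apply zero_compr. apply p2i1.
Qed.
Lemma pr_zero_l {W X1 X2 : C} (z : hom W X1) (f : hom W X2) : is_zero_mor z -> pr z f = i2 ∘ f.
Proof.
  intros Hz. apply pair_ext; lassoc; rewrite ?pr_p1, ?pr_p2, ?p2i2, ?comp_id_l; auto.
  apply zero_unique; auto. apply zero_compr. apply p1i2.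
Qed.

Definition nab (Y : C) : hom (BP Y Y) Y := cp (idm Y) (idm Y).
Definition del (X : C) : hom X (BP X X) := pr (idm X) (idm X).
Definition add {X Y : C} (f g : hom X Y) : hom X Y := nab Y ∘ pr f g.

Lemma add_compr {V X Y : C} (f g : hom X Y) (h : hom V X) : add f g ∘ h = add (f ∘ h) (g ∘ h).
Proof. unfold add. rewrite <- comp_assoc, pr_comp. reflexivity. Qed.

Lemma add_zero_r {X Y : C} (f z : hom X Y) : is_zero_mor z -> add f z = f.
Proof. intros Hz. unfold add, nab. rewrite pr_zero_r, comp_assoc, cp_i1, comp_id_l; auto. Qed.
Lemma add_zero_l {X Y : C} (f z : hom X Y) : is_zero_mor z -> add z f = f.
Proof. intros Hz. unfold add, nab. rewrite pr_zero_l, comp_assoc, cp_i2, comp_id_l; auto. Qed.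

Lemma L {A1 A2 B' W Y : C} (s1 : hom A1 B') (r1 : hom B' A1) (s2 : hom A2 B') (r2 : hom B' A2)
  (c : hom B' Y) (d : hom W B') (u : hom A1 Y) (v : hom A2 Y) (a : hom W A1) (b : hom W A2) :
  is_biproduct s1 r1 s2 r2 -> c ∘ s1 = u -> c ∘ s2 = v -> r1 ∘ d = a -> r2 ∘ d = b ->
  c ∘ d = add (u ∘ a) (v ∘ b).
Proof.
  intros Hb Hc1 Hc2 Hd1 Hd2.
  destruct Hb as [H11 [H22 [H21 [H12 [_ HU]]]]].
  assert (E : c = nab Y ∘ pr (u ∘ r1) (v ∘ r2)).
  { destruct (HU Y u v) as [w [_ Uw]]. rewrite (Uw c Hc1 Hc2). symmetry. apply Uw.
    - rewrite <- comp_assoc, pr_comp, <- !comp_assoc, H11, comp_id_r, pr_zero_r.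
      + unfold nab. rewrite comp_assoc, cp_i1, comp_id_l. reflexivity.
      + apply zero_compl. auto.
    - rewrite <- comp_assoc, pr_comp, <- !comp_assoc, H22, comp_id_r, pr_zero_l.
      + unfold nab. rewrite comp_assoc, cp_i2, comp_id_l. reflexivity.
      + apply zero_compl. auto. }
  rewrite E. unfold add. rewrite <- comp_assoc, pr_comp, <- !comp_assoc, Hd1, Hd2. reflexivity.
Qed.

Lemma add_compl {X Y V : C} (f g : hom X Y) (h : hom Y V) : h ∘ add f g = add (h ∘ f) (h ∘ g).
Proof.
  unfold add at 1. rewrite comp_assoc.
  eapply L; [apply (BP_spec Y Y)|..]; unfold nab; rewrite ?l_cp_i1, ?l_cp_i2, ?comp_id_r, ?pr_p1, ?pr_p2; reflexivity.
Qed.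

Lemma add_cp {X Y : C} (f g : hom X Y) : add f g = cp f g ∘ del X.
Proof.
  symmetry. rewrite <- (comp_id_r f) at 2. rewrite <- (comp_id_r g) at 2.
  eapply L; [apply (BP_spec X X)|..]; unfold del; rewrite ?cp_i1, ?cp_i2, ?pr_p1, ?pr_p2; reflexivity.
Qed.

Lemma interchange {X Y : C} (a b c d : hom X Y) :
  add (add a b) (add c d) = add (add a c) (add b d).
Proof.
  rewrite (add_cp a b), (add_cp c d), <- add_compr.
  rewrite (add_cp (add a c)).
  f_equal. apply copair_ext.
  - rewrite cp_i1. unfold add. rewrite <- comp_assoc, pr_comp, !cp_i1. reflexivity.
  - rewrite cp_i2. unfold add. rewrite <- comp_assoc, pr_comp, !cp_i2. reflexivity.
Qed.

Lemma add_comm {X Y : C} (a b : hom X Y) : add a b = add b a.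
Proof.
  pose proof (interchange (zm X Y) a b (zm X Y)) as E.
  pose proof (zm_zero X Y) as Z.
  rewrite (add_zero_l a _ Z), (add_zero_l b _ Z), (add_zero_r a _ Z), (add_zero_r b _ Z) in E.
  exact E.
Qed.

Lemma add_assoc {X Y : C} (a b c : hom X Y) : add (add a b) c = add a (add b c).
Proof.
  pose proof (interchange a b (zm X Y) c) as E.
  pose proof (zm_zero X Y) as Z.
  rewrite (add_zero_l c _ Z), (add_zero_r a _ Z) in E.
  exact E.
Qed.

Lemma inv_uniq {X Y : C} (a b b' : hom X Y) :
  is_zero_mor (add a b) -> is_zero_mor (add a b') -> b = b'.
Proof.
  intros H1 H2.
  rewrite <- (add_zero_r b (add a b')) by auto.
  rewrite <- add_assoc, (add_comm b a), add_zero_l; auto.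
Qed.


Lemma star_pr {W X1 X2 : C} (f : hom W X1) (g : hom W X2) : star (pr f g) = cp (star f) (star g).
Proof.
  apply copair_ext; rewrite ?cp_i1, ?cp_i2.
  - assert (E : star (p1 ∘ pr f g) = star f) by (rewrite pr_p1; reflexivity).
    rewrite star_comp in E. unfold p1 in E. rewrite star_star in E. exact E.
  - assert (E : star (p2 ∘ pr f g) = star g) by (rewrite pr_p2; reflexivity).
    rewrite star_comp in E. unfold p2 in E. rewrite star_star in E. exact E.
Qed.

Lemma star_del (X : C) : star (del X) = nab X.
Proof. unfold del, nab. rewrite star_pr, star_id. reflexivity. Qed.
Lemma star_nab (X : C) : star (nab X) = del X.
Proof. rewrite <- star_del, star_star. reflexivity. Qed.

Definition sw (X : C) : hom (BP X X) (BP X X) := pr p2 p1.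
Lemma sw_i1 X : sw X ∘ i1 = i2.
Proof.
  unfold sw. apply pair_ext; lassoc; rewrite ?pr_p1, ?pr_p2, ?p1i1, ?p2i2; auto.
  apply zero_unique; [apply p2i1|apply p1i2].
Qed.
Lemma sw_i2 X : sw X ∘ i2 = i1.
Proof.
  unfold sw. apply pair_ext; lassoc; rewrite ?pr_p1, ?pr_p2, ?p1i1, ?p2i2; auto.
  apply zero_unique; [apply p1i2|apply p2i1].
Qed.
Lemma star_sw X : star (sw X) = sw X.
Proof.
  apply copair_ext.
  - rewrite sw_i1. unfold sw. rewrite star_pr. unfold p1, p2. rewrite !star_star, cp_i1. reflexivity.
  - rewrite sw_i2. unfold sw. rewrite star_pr. unfold p1, p2. rewrite !star_star, cp_i2. reflexivity.
Qed.
Lemma nab_sw X : nab X ∘ sw X = nab X.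
Proof.
  apply copair_ext; rewrite <- comp_assoc; [rewrite sw_i1|rewrite sw_i2]; unfold nab;
  rewrite ?cp_i1, ?cp_i2; reflexivity.
Qed.

Lemma neg_ex (X : C) : exists n : hom X X, is_zero_mor (add (idm X) n).
Proof.
  destruct (HK _ _ (nab X)) as [K [k [Hk Hiso]]].
  pose proof Hk as Hk'.
  apply kernel_iff in Hk'. destruct Hk' as [Hkz Uk].
  set (k1 := p1 ∘ k). set (k2 := p2 ∘ k).
  assert (Ek : k = pr k1 k2) by apply pr_eta.
  assert (Hk12 : is_zero_mor (add k1 k2)) by (unfold add; rewrite <- Ek; exact Hkz).
  assert (Hd : normal_mono (del X)).
  { apply (HR4 X (BP X X) i1 p1 i2 p2).
    - split; [apply BP_spec| split; reflexivity].
    - apply pr_p1.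
    - apply pr_p2. }
  destruct Hd as [V [q Hq]].
  apply kernel_iff in Hq. destruct Hq as [Hqz Uq].
  assert (Hc : is_cokernel (del X) (star k)).
  { apply ker_star_coker. rewrite star_del. exact Hk. }
  apply coker_iff in Hc. destruct Hc as [Hcz Uc].
  destruct (Uc V q Hqz) as [phi [Ephi _]].
  assert (Esk : star k = cp (star k1) (star k2)) by (rewrite Ek at 1; apply star_pr).
  assert (Lk : forall W (x y : hom W X), star k ∘ pr x y = add (star k1 ∘ x) (star k2 ∘ y)).
  { intros W x y. eapply L; [apply (BP_spec X X)|..]; rewrite ?Esk, ?cp_i1, ?cp_i2, ?pr_p1, ?pr_p2; reflexivity. }
  assert (F4 : forall W (x y : hom W X), star k1 ∘ x = star k1 ∘ y -> x = y).
  { intros W x y Exy.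
    assert (Z1 : is_zero_mor (q ∘ pr x y)).
    { rewrite <- Ephi, <- comp_assoc, Lk, Exy, <- Lk.
      assert (E : pr y y = del X ∘ y) by (unfold del; rewrite pr_comp, !comp_id_l; reflexivity).
      rewrite E. lassoc. apply zero_compr. rewrite <- comp_assoc. apply zero_compl. exact Hcz. }
    destruct (Uq W (pr x y) Z1) as [t [Et _]].
    transitivity t.
    - rewrite <- (pr_p1 x y), <- Et. unfold del. lassoc. rewrite pr_p1, comp_id_l. reflexivity.
    - rewrite <- (pr_p2 x y), <- Et. unfold del. lassoc. rewrite pr_p2, comp_id_l. reflexivity. }
  assert (Z2 : is_zero_mor (nab X ∘ (sw X ∘ k))) by (rewrite comp_assoc, nab_sw; exact Hkz).
  destruct (Uk K (sw X ∘ k) Z2) as [psi [Epsi _]].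
  assert (E1 : k1 ∘ psi = k2).
  { unfold k1, k2. rewrite <- comp_assoc, Epsi. unfold sw. lassoc. rewrite pr_p1. reflexivity. }
  assert (E2 : k2 ∘ psi = k1).
  { unfold k1, k2. rewrite <- comp_assoc, Epsi. unfold sw. lassoc. rewrite pr_p2. reflexivity. }
  assert (F6 : is_zero_mor (add (idm K) psi)).
  { assert (Z3 : is_zero_mor (k ∘ add (idm K) psi)).
    { rewrite add_compl, comp_id_r. apply zero_of_proj; rewrite add_compl.
      - fold k1. rewrite comp_assoc. fold k1. rewrite E1. exact Hk12.
      - fold k2. rewrite comp_assoc. fold k2. rewrite E2, add_comm. exact Hk12. }
    unfold isometry in Hiso.
    assert (E : add (idm K) psi = star k ∘ (k ∘ add (idm K) psi))
      by (rewrite comp_assoc, Hiso, comp_id_l; reflexivity).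
    rewrite E. apply zero_compl. exact Z3. }
  assert (Epsi2 : psi = star k ∘ sw X ∘ k).
  { rewrite <- comp_assoc, <- Epsi, comp_assoc. unfold isometry in Hiso. rewrite Hiso, comp_id_l. reflexivity. }
  assert (Spsi : star psi = psi).
  { rewrite Epsi2 at 1. rewrite !star_comp, star_sw, star_star, comp_assoc. rewrite <- Epsi2. reflexivity. }
  set (g := star k1 ∘ k1).
  assert (Eg : g = psi ∘ (g ∘ psi)).
  { apply (inv_uniq (g ∘ psi)).
    - rewrite add_comm. rewrite <- (comp_id_r g) at 1. rewrite <- add_compl. apply zero_compl. exact F6.
    - rewrite <- (comp_id_l (g ∘ psi)) at 1. rewrite <- add_compr. apply zero_compr. exact F6. }
  assert (Eg2 : star k2 ∘ k2 = g).
  { rewrite <- E1 at 1. rewrite star_comp, Spsi. idtac. 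
    rewrite <- E1. rewrite Eg at 1. unfold g. lassoc. reflexivity. }
  set (rho := add (star k1) (star k1)).
  assert (F10 : rho ∘ k1 = idm K).
  { unfold rho. rewrite add_compr. fold g. rewrite <- Eg2 at 2. unfold g.
    rewrite <- (Lk K k1 k2), <- Ek. exact Hiso. }
  assert (F11 : k1 ∘ rho = idm X).
  { apply star_inj. apply F4. rewrite <- !star_comp, <- comp_assoc, F10, comp_id_r, comp_id_l. reflexivity. }
  exists (k2 ∘ rho).
  rewrite <- F11, <- add_compr. apply zero_compr. exact Hk12.
Qed.


Lemma split_normal {P Y : C} (e : hom P Y) (s : hom Y P) : e ∘ s = idm Y -> normal_epi e.
Proof.
  intros Hs. destruct (neg_ex P) as [n Hn].
  exists P, (add (idm P) (n ∘ (s ∘ e))). apply coker_iff. split.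
  - rewrite add_compl, comp_id_r.
    assert (E : add e (e ∘ n) ∘ (s ∘ e) = add e (e ∘ (n ∘ (s ∘ e)))).
    { rewrite add_compr. f_equal.
      - rewrite comp_assoc, Hs, comp_id_l. reflexivity.
      - lassoc. reflexivity. }
    rewrite <- E. apply zero_compr.
    rewrite <- (comp_id_r e) at 1. rewrite <- add_compl. apply zero_compl. exact Hn.
  - intros W h Hh. rewrite add_compl, comp_id_r in Hh.
    assert (Eh : h = h ∘ (s ∘ e)).
    { apply (inv_uniq (h ∘ (n ∘ (s ∘ e)))).
      - rewrite add_comm. exact Hh.
      - rewrite add_comm.
        assert (E : add h (h ∘ n) ∘ (s ∘ e) = add (h ∘ (s ∘ e)) (h ∘ (n ∘ (s ∘ e)))).
        { rewrite add_compr. f_equal. lassoc. reflexivity. }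
        rewrite <- E. apply zero_compr.
        rewrite <- (comp_id_r h) at 1. rewrite <- add_compl. apply zero_compl. exact Hn. }
    exists (h ∘ s). split.
    + rewrite <- comp_assoc, <- Eh. reflexivity.
    + intros u' Hu. rewrite <- Hu, <- comp_assoc, Hs, comp_id_r. reflexivity.
Qed.

Lemma split_of_normal_epi {X Q : C} (e : hom X Q) : normal_epi e -> exists s, e ∘ s = idm Q.
Proof.
  intros [X0 [g Hg]].
  destruct (HK _ _ (star g)) as [K [k [Hk Hiso]]].
  apply ker_star_coker in Hk.
  apply coker_iff in Hk. destruct Hk as [Hqz Uq].
  apply coker_iff in Hg. destruct Hg as [Hez Ue].
  destruct (Ue K (star k) Hqz) as [psi [Epsi _]].
  destruct (Uq Q e Hez) as [phi [Ephi _]].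
  destruct (Ue Q e Hez) as [u0 [_ U0]].
  assert (Epp : phi ∘ psi = idm Q).
  { rewrite (U0 (phi ∘ psi)), (U0 (idm Q)); auto.
    - apply comp_id_l.
    - rewrite <- comp_assoc, Epsi, Ephi. reflexivity. }
  exists (k ∘ psi).
  rewrite <- Ephi. unfold isometry in Hiso.
  rewrite <- comp_assoc, (comp_assoc psi k (star k)), Hiso, comp_id_l. exact Epp.
Qed.

Lemma pullback_normal {X Y Q P : C} (e : hom X Q) (f : hom Y Q) (e' : hom P Y) (f' : hom P X) :
  normal_epi e -> is_pullback e f e' f' -> normal_epi e'.
Proof.
  intros He [Ec U].
  destruct (split_of_normal_epi _ He) as [s Hs].
  assert (E : f ∘ idm Y = e ∘ (s ∘ f)) by (rewrite comp_id_r, comp_assoc, Hs, comp_id_l; reflexivity).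
  destruct (U Y (idm Y) (s ∘ f) E) as [sg [[H1 _] _]].
  exact (split_normal _ _ H1).
Qed.

Lemma qa : quasi_abelian C.
Proof.
  unfold quasi_abelian. split; [|split; [|split; [|split]]].
  - split; [exists Z0; exact HZ0| split].
    + intros X1 X2. destruct (HOB X1 X2) as [B [s1 [r1 [s2 [r2 [Hb _]]]]]].
      exists B, s1, r1, s2, r2. exact Hb.
    + intros X Y f. destruct (neg_ex Y) as [n Hn].
      exists (n ∘ f), (add f (n ∘ f)). split.
      * exists (BP Y Y), i1, p1, i2, p2. split; [apply BP_spec|].
        exists (pr f (n ∘ f)), (nab Y).
        split; [apply pr_p1|split; [apply pr_p2|split; [apply cp_i1|split; [apply cp_i2|reflexivity]]]].
      * rewrite <- (comp_id_l f) at 1. rewrite <- add_compr. apply zero_compr. exact Hn.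
  - intros X Y f. destruct (HK _ _ f) as [K [k [Hk _]]]. exists K, k. exact Hk.
  - intros X Y f. destruct (HK _ _ (star f)) as [K [k [Hk _]]]. exists K, (star k).
    apply ker_star_coker. exact Hk.
  - intros K X Y P m f m' f' [V [g Hm]] Hpo.
    assert (Hn : normal_epi (star m)).
    { exists V, (star g). apply ker_star_coker. rewrite star_star. exact Hm. }
    destruct (pullback_normal _ _ _ _ Hn (pushout_star _ _ _ _ _ Hpo)) as [W [h Hh]].
    exists W, (star h). apply coker_star_ker in Hh. rewrite star_star in Hh. exact Hh.
  - intros X Y Q P e f e' f'. apply pullback_normal.
Qed.

End PH.

Theorem proposition3p6 (C : StarCategory) :
  preHilbert C -> quasi_abelian C.
Proof.
  intros [[Z0 HZ0] [HOB [HK HR4]]].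
  exact (qa C Z0 HZ0 HOB HK HR4).
Qed.
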